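(* Let $\mathcal G$ be a DAG, $\boldsymbol\alpha$ a proper set of directed paths in $\mathcal G$, and $(WY)$ an edge of $\mathcal G$. Then $\lhd_{(WY)}(\boldsymbol\alpha)$ is proper.
   Context: A directed path is a sequence of distinct vertices $A_1\to A_2\to\cdots\to A_k$ joined by directed edges; a prefix subpath is a contiguous initial segment $A_1\to\cdots\to A_m$. A set of directed paths is proper if no path in it is a prefix subpath of another path in it. For an edge $(WY)$ (i.e. $W\to Y$), the funnel operator $\lhd_{(WY)}$ maps a set of directed paths $\boldsymbol\alpha$ to the set obtained by replacing each path of the form $(A,\ldots,W,Y)$ by $(A,\ldots,W)$, removing all paths that contain $W$ but do not have $(W,Y)$ as a suffix, and keeping all other paths intact. *)

(* Defs.v *)
From mathcomp Require Import all_boot.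
Set Implicit Arguments. Unset Strict Implicit. Unset Printing Implicit Defensive.

Definition dag (T : finType) (e : rel T) : Prop :=
  forall (x : T) (p : seq T), path e x p -> ~~ e (last x p) x.

Definition dpath (T : finType) (e : rel T) (s : seq T) : Prop :=
  if s is x :: s' then path e x s' && uniq s else False.

Definition pathset (T : finType) := seq T -> Prop.

Definition proper_paths (T : finType) (e : rel T) (a : pathset T) : Prop :=
  (forall p, a p -> dpath e p) /\
  (forall p q, a p -> a q -> p <> q -> ~~ prefix p q).

Definition funnel (T : finType) (W Y : T) (a : pathset T) : pathset T :=
  fun q => exists2 p, a p &
    ((exists r, p = rcons (rcons r W) Y /\ q = rcons r W)
     \/ (W \notin p /\ q = p)).

(* Main.v *)
Require Import Defs.
From mathcomp Require Import all_boot.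

Lemma dpath_rcons (T : finType) (e : rel T) r (W Y : T) :
  dpath e (rcons (rcons r W) Y) -> dpath e (rcons r W).
Proof.
case: r => [|x r] /=; first by [].
rewrite rcons_path mem_rcons in_cons negb_or rcons_uniq => /and3P[/andP[-> _] /andP[_ ->] /andP[_ ->]].
by [].
Qed.

Lemma dpath_uniq (T : finType) (e : rel T) s : dpath e s -> uniq s.
Proof. by case: s => [|x s] //= /andP[_]. Qed.

Theorem lemma1 (T : finType) (e : rel T) (a : pathset T) (W Y : T) :
  dag e -> proper_paths e a -> e W Y -> proper_paths e (funnel W Y a).
Proof.
move=> _ [Hd Hp] _; split.
  move=> q [p ap [[r [E ->]]|[_ ->]]]; last exact: Hd; subst p.
  by apply: (@dpath_rcons T e r W Y); apply: Hd.
move=> q1 q2 [p1 ap1 H1] [p2 ap2 H2].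
case: H1 => [[r1 [E1 E1']]|[W1 E1']]; case: H2 => [[r2 [E2 E2']]|[W2 E2']];
  subst => neq; apply/negP => /prefixP [s Hs].
- have U := @dpath_uniq _ _ _ (Hd _ ap2); rewrite rcons_uniq in U.
  case/andP: U => _ U.
  case/lastP: s Hs => [|s y]; first by rewrite cats0 => E; apply: neq.
  rewrite -rcons_cat => /rcons_inj [Hr Hy]; subst y.
  by move: U; rewrite Hr rcons_uniq mem_cat mem_rcons in_cons eqxx.
- by move: W2; rewrite Hs mem_cat mem_rcons in_cons eqxx.
- case/lastP: s Hs => [|s y]; first by rewrite cats0 => E; apply: neq.
  rewrite -rcons_cat => /rcons_inj [Hr Hy]; subst y.
  have: prefix p1 (rcons (rcons r2 W) Y).
    by apply/prefixP; exists (rcons s W ++ [:: Y]); rewrite Hr cats1 -!rcons_cat.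
  apply/negP/Hp => //.
  by move=> E; move: W1; rewrite E mem_rcons in_cons mem_rcons in_cons eqxx orbT.
- move/negP: (Hp _ _ ap1 ap2 neq); apply; apply/prefixP; exists s; by rewrite ?Hs.
Qed.
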